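(* Let $\mathcal N$ be an irreducible SDAN. Then every agent of $A$ is a party of every atom of $\mathcal N$, and for every atom $n\neq n_f$ and every outcome $r\in R_n$ there is an atom $n'$ such that $\mathcal X(n,a,r)=\{n'\}$ for every agent $a\in A$.
   Context: Fix a finite nonempty set $A$ of agents; each $a\in A$ has a nonempty set $Q_a$ of internal states, $Q_A=\prod_{a\in A}Q_a$. A transformer is a left-total relation on $Q_A$; for $S\subseteq A$ an $S$-transformer is one with $(q,q')\in\tau\Rightarrow q_a=q'_a$ for all $a\notin S$. An atom is $n=(P_n,R_n,\delta_n)$: $P_n\subseteq A$ nonempty (parties), $R_n$ finite nonempty (outcomes), $\delta_n$ assigns to each $r\in R_n$ a $P_n$-transformer $\langle n,r\rangle$. A negotiation is $\mathcal N=(N,n_0,n_f,\mathcal X)$ with $N$ a finite set of atoms, $n_0,n_f\in N$ (possibly equal), $T(N)=\{(n,a,r): n\in N,a\in P_n,r\in R_n\}$, $\mathcal X:T(N)\to 2^N$, such that every agent is a party of $n_0$ and of $n_f$, and $\mathcal X(n,a,r)=\emptyset$ iff $n=n_f$. Its graph has vertices $N$ and edges $(n,n')$ whenever $n'\in\mathcal X(n,a,r)$ for some $(n,a,r)$; $\mathcal N$ is acyclic if the graph has no cycle. A marking is $x:A\to 2^N$; initial $x_0(a)=\{n_0\}$, final $x_f(a)=\emptyset$. $x$ enables $n$ if $n\in x(a)$ for all $a\in P_n$; then for $r\in R_n$ the step $(n,r)$ leads to $x'$ with $x'(a)=\mathcal X(n,a,r)$ for $a\in P_n$, $x'(a)=x(a)$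 otherwise. A large step is a finite occurrence sequence from $x_0$ to $x_f$. $\mathcal N$ is sound if every atom is enabled at some reachable marking and every occurrence sequence from $x_0$ is a large step or can be extended to one. An agent $a$ is deterministic if for each $(n,a,r)\in T(N)$ with $n\ne n_f$, $\mathcal X(n,a,r)$ is a singleton; $\mathcal N$ is deterministic if all agents are deterministic. An SDAN is a sound, deterministic, acyclic negotiation. Merge rule. Guard: some atom $n$ has distinct outcomes $r_1,r_2$ with $\mathcal X(n,a,r_1)=\mathcal X(n,a,r_2)$ for all $a\in P_n$. Action: replace $r_1,r_2$ in $R_n$ by a fresh outcome $r_f$ with $\mathcal X(n,a,r_f)=\mathcal X(n,a,r_1)$ for $a\in P_n$ and $\langle n,r_f\rangle=\langle n,r_1\rangle\cup\langle n,r_2\rangle$. $(n,r)$ unconditionally enables $n'$ if $P_n\supseteq P_{n'}$ and $\mathcal X(n,a,r)=\{n'\}$ for all $a\in P_{n'}$. d-shortcut rule. Guard: atoms $n\neq n'$ and $r\in R_n$ such that $(n,r)$ unconditionally enables $n'$; $n'$ has at most one outcome; and if $n'\in\mathcal X(\tilde n,\tilde a,\tilde r)$ for at least one $(\tilde n,\tilde a,\tilde r)\in T(N)$ with $\tilde n\neq n$, then $\{n'\}=\mathcal X(\tilde n,\tilde a,\tilde r)$ for some $(\tilde n,\tilde a,\tilde r)\in T(N)$ with $\tilde n\ne n$. Action: (1) replace $R_n$ by $(R_n\setminus\{r\})\cup\{r'_f:r'\in R_{n'}\}$ with fresh names; (2) for $a\in P_{n'}$ set $\mathcal X(n,a,r'_f)=\mathcal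 X(n',a,r')$, for $a\in P_n\setminus P_{n'}$ set $\mathcal X(n,a,r'_f)=\mathcal X(n,a,r)$; (3) $\langle n,r'_f\rangle=\langle n,r\rangle\langle n',r'\rangle$ (relational composition); (4) if afterwards $n'\notin\mathcal X(\tilde n,\tilde a,\tilde r)$ for all $(\tilde n,\tilde a,\tilde r)\in T(N)$, remove $n'$. An SDAN is irreducible if neither the merge rule nor the d-shortcut rule can be applied to it. *)

(* Defs.v *)
From mathcomp Require Import all_boot.
Set Implicit Arguments. Unset Strict Implicit. Unset Printing Implicit Defensive.

(* The atom set N is the whole finite type [atom]; outcomes of all atoms are
   drawn from a common finite type [outcome], with R_n = outcomes n. *)
Definition gstate (A : finType) (Q : A -> Type) := forall a : A, Q a.

Record negotiation (A : finType) (Q : A -> Type) := Negotiation {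
  atom : finType;
  outcome : finType;
  parties : atom -> {set A};
  outcomes : atom -> {set outcome};
  trans : atom -> outcome -> gstate Q -> gstate Q -> Prop;
  xnext : atom -> A -> outcome -> {set atom};
  n0 : atom;
  nf : atom }.

Arguments parties {A Q} n _.
Arguments outcomes {A Q} n _.
Arguments trans {A Q} n _ _ _ _.
Arguments xnext {A Q} n _ _ _.
Arguments n0 {A Q} n.
Arguments nf {A Q} n.

Section Neg.
Variables (A : finType) (Q : A -> Type) (N : negotiation Q).
Local Notation P := (parties N).
Local Notation R := (outcomes N).
Local Notation X := (xnext N).
Local Notation atm := (atom N).
Local Notation out := (outcome N).

Definition inT (n : atm) (a : A) (r : out) := (a \in P n) && (r \in R n).

Definition transformer (S : {set A}) (t : gstate Q -> gstate Q -> Prop) :=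
  (forall q, exists q', t q q') /\
  (forall q q', t q q' -> forall a, a \notin S -> q a = q' a).

Definition well_formed : Prop :=
  (exists a : A, True) /\
  (forall a, inhabited (Q a)) /\
  (forall n, P n != set0) /\
  (forall n, R n != set0) /\
  (forall n r, r \in R n -> transformer (P n) (trans N n r)) /\
  (forall a, a \in P (n0 N)) /\ (forall a, a \in P (nf N)) /\
  (forall n a r, inT n a r -> (X n a r == set0) = (n == nf N)).

Definition edge : rel atm :=
  fun n n' => [exists a, exists r, inT n a r && (n' \in X n a r)].

Definition acyclic : Prop :=
  ~ exists (n : atm) (p : seq atm), p != [::] /\ path edge n p /\ last n p = n.

Definition marking := {ffun A -> {set atm}}.
Definition x0 : marking := [ffun _ => [set n0 N]].
Definition xf : marking := [ffun _ => set0].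
Definition enabled (x : marking) (n : atm) := [forall a in P n, n \in x a].
Definition stepm (x : marking) (n : atm) (r : out) : marking :=
  [ffun a => if a \in P n then X n a r else x a].

Fixpoint occ (x : marking) (s : seq (atm * out)) : option marking :=
  match s with
  | [::] => Some x
  | (n, r) :: s' => if enabled x n && (r \in R n) then occ (stepm x n r) s' else None
  end.

Definition sound : Prop :=
  (forall n, exists s x, occ x0 s = Some x /\ enabled x n) /\
  (forall s x, occ x0 s = Some x -> exists s', occ x0 (s ++ s') = Some xf).

Definition deterministic : Prop :=
  forall n a r, inT n a r -> n != nf N -> exists n', X n a r = [set n'].

Definition SDAN : Prop := sound /\ deterministic /\ acyclic.

Definition merge_applicable : Prop :=
  exists n r1 r2, [/\ r1 \in R n, r2 \in R n, r1 != r2 &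
                     forall a, a \in P n -> X n a r1 = X n a r2].

Definition uncond_enables (n : atm) (r : out) (n' : atm) : Prop :=
  P n' \subset P n /\ (forall a, a \in P n' -> X n a r = [set n']).

Definition dshortcut_applicable : Prop :=
  exists n n' r,
    [/\ n != n', r \in R n, uncond_enables n r n', #|R n'| <= 1 &
     (exists nt at0 rt, [/\ inT nt at0 rt, nt != n & n' \in X nt at0 rt]) ->
     (exists nt at0 rt, [/\ inT nt at0 rt, nt != n & X nt at0 rt = [set n']])].

Definition irreducible : Prop := ~ merge_applicable /\ ~ dshortcut_applicable.

End Neg.

(* Main.v *)
Require Import Defs.
From mathcomp Require Import all_boot.
From mathcomp Require Import zify.
Set Implicit Arguments. Unset Strict Implicit. Unset Printing Implicit Defensive.

Section Main.
Variables (A : finType) (Q : A -> Type) (N : negotiation Q).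
Hypotheses (wf : well_formed N) (snd : sound N) (det : deterministic N)
  (acy : acyclic N) (irr : irreducible N).

Local Notation P := (parties N).
Local Notation R := (outcomes N).
Local Notation X := (xnext N).
Local Notation atm := (atom N).
Local Notation mk := (marking N).

Lemma occ_cat (x y : mk) s s' : occ x s = Some y -> occ x (s ++ s') = occ y s'.
Proof.
elim: s x => [|[n r] s IH] x /=; first by case=> ->.
by case: ifP => // _ /IH.
Qed.

Definition Reach (x : mk) := exists s, occ (x0 N) s = Some x.

Lemma Reach_step (x : mk) n r : Reach x -> enabled x n -> r \in R n -> Reach (stepm x n r).
Proof.
case=> s Hs en rR; exists (s ++ [:: (n, r)]).
by rewrite (occ_cat _ Hs) /= en rR.
Qed.

Lemma Reach_occ (x y : mk) s : Reach x -> occ x s = Some y -> Reach y.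
Proof.
case=> s0 H0 H; exists (s0 ++ s); by rewrite (occ_cat _ H0).
Qed.

Lemma Fin (x : mk) : Reach x -> exists s, occ x s = Some (xf N).
Proof.
case=> s Hs; case: snd => _ /(_ _ _ Hs) [s' Hs'].
by exists s'; rewrite -(occ_cat _ Hs).
Qed.

Lemma en_ex (x : mk) : Reach x -> x <> xf N -> exists n, enabled x n.
Proof.
move=> /Fin [[|[n r] s] /=]; first by case=> ->.
by case: ifP => // /andP [en _] _ _; exists n.
Qed.

Lemma wf_X n a r : inT n a r -> (X n a r == set0) = (n == nf N).
Proof. by case: wf => _ [_ [_ [_ [_ [_ [_ H]]]]]] /H. Qed.

Definition sgl (x : mk) := forall b, x b = set0 \/ exists m, x b = [set m].

Lemma sgl_step (x : mk) n r : sgl x -> r \in R n -> sgl (stepm x n r).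
Proof.
move=> H rR b; rewrite ffunE; case: ifP => // bP.
have iT : inT n b r by rewrite /inT bP rR.
case: (eqVneq n (nf N)) => [e|ne].
  by left; apply/eqP; rewrite wf_X // e.
by right; apply: det.
Qed.

Lemma sgl_occ (x y : mk) s : sgl x -> occ x s = Some y -> sgl y.
Proof.
elim: s x => [|[n r] s IH] x /=; first by move=> ? [<-].
case: ifP => // /andP [_ rR] H; apply: IH; exact: sgl_step.
Qed.

Lemma sgl_reach (x : mk) : Reach x -> sgl x.
Proof.
case=> s; apply: sgl_occ => b; right; exists (n0 N); by rewrite ffunE.
Qed.

Lemma set1_nz (T : finType) (m : T) : [set m] != set0.
Proof. by apply/eqP => h; have := set11 m; rewrite h inE. Qed.

Lemma stay (x y : mk) s b m : x b = [set m] -> b \notin P m -> occ x s = Some y -> y b = [set m].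
Proof.
elim: s x => [|[n r] s IH] x /=; first by move=> ? ? [<-].
case: ifP => // /andP [en _] xb bm; apply: IH => //.
rewrite ffunE; case: ifP => // bn.
move/forall_inP: en => /(_ _ bn); rewrite xb inE => /eqP e.
by rewrite -e bn in bm.
Qed.

Lemma factD (x : mk) b m : Reach x -> x b = [set m] -> b \in P m.
Proof.
move=> /Fin [s Hs] xb; apply/negPn/negP => bm.
have := stay xb bm Hs; rewrite ffunE => h.
by move: (set1_nz m); rewrite -h eqxx.
Qed.


Definition cnt (n : atm) := #|[pred z | connect (@edge _ _ N) n z]|.

Lemma edge_noback (n m : atm) : edge n m -> ~~ connect (@edge _ _ N) m n.
Proof.
move=> e; apply/negP => /connectP [p pp lp].
apply: acy; exists n, (m :: p); split => //; split => //=.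
by rewrite e pp.
Qed.

Lemma cnt_edge (n m : atm) : edge n m -> cnt m < cnt n.
Proof.
move=> e; apply: proper_card; apply/properP; split.
  apply/subsetP => z; rewrite !inE => h; exact: connect_trans (connect1 e) h.
by exists n; rewrite !inE ?connect0 // edge_noback.
Qed.

Definition key (n : atm) := (#|atm| - cnt n) * #|atm| + enum_rank n.

Lemma key_inj (n m : atm) : key n = key m -> n = m.
Proof.
move=> h; have := congr1 (modn^~ #|atm|) h; rewrite /key !modnMDl.
have c := fun z : atm => (ltn_ord (enum_rank z)); rewrite !modn_small ?c //.
by move/ord_inj/enum_rank_inj.
Qed.

Lemma cnt_le (n : atm) : cnt n <= #|atm|.
Proof. exact: max_card. Qed.

Lemma key_edge (n m : atm) : edge n m -> key n < key m.
Proof.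
move=> e; have h := cnt_edge e; have hn := cnt_le n; have hm := cnt_le m.
have rn : enum_rank n < #|atm| := ltn_ord _.
rewrite /key; apply: (@leq_trans ((#|atm| - cnt n).+1 * #|atm|)).
  by rewrite mulSn addnC ltn_add2r.
have h2 : (#|atm| - cnt n).+1 <= #|atm| - cnt m by lia.
by rewrite (leq_trans _ (leq_addr _ _)) // leq_mul2r h2 orbT.
Qed.


Lemma en_step (x : mk) n r m : r \in R n -> enabled (stepm x n r) m -> enabled x m \/ edge n m.
Proof.
move=> rR en; case: (boolP [exists c, (c \in P m) && (c \in P n)]).
  case/existsP => c /andP [cm cn]; right; apply/existsP; exists c; apply/existsP; exists r.
  move/forall_inP: en => /(_ _ cm); rewrite ffunE cn => ->.
  by rewrite /inT cn rR.
move=> h; left; apply/forall_inP => c cm.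
move/forall_inP: en => /(_ _ cm); rewrite ffunE; case: ifP => // cn.
by case/negP: h; apply/existsP; exists c; rewrite cm cn.
Qed.

Lemma keyinv_step (x : mk) n r k : (forall m, enabled x m -> k < key m) -> enabled x n ->
  r \in R n -> forall m, enabled (stepm x n r) m -> k < key m.
Proof.
move=> H en rR m /(en_step rR) [/H //|/key_edge e].
exact: ltn_trans (H _ en) e.
Qed.

Lemma keep s (x y : mk) k b d : (forall m, enabled x m -> k < key m) -> x b = [set d] ->
  key d <= k -> occ x s = Some y -> y b = [set d].
Proof.
elim: s x => [|[n r] s IH] x /=; first by move=> ? ? ? [<-].
case: ifP => // /andP [en rR] H xb kd; apply: IH => //.
  exact: keyinv_step.
rewrite ffunE; case: ifP => // bn.
have /forall_inP /(_ _ bn) := en; rewrite xb inE => /eqP e.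
by have := H _ en; rewrite e ltnNge kd.
Qed.

Lemma stuck (x : mk) b d : Reach x -> x b = [set d] -> (forall m, enabled x m -> key d < key m) -> False.
Proof.
move=> /Fin [s Hs] xb H; have := keep H xb (leqnn _) Hs; rewrite ffunE => h.
by move: (set1_nz d); rewrite -h eqxx.
Qed.


Definition syncb (x : mk) := [exists m, [forall b, x b == [set m]]].
Definition kmin (x : mk) n := enabled x n /\ forall m, enabled x m -> key n <= key m.

Inductive GR : mk -> Prop :=
| GR0 : GR (x0 N)
| GRs x n r : GR x -> kmin x n -> r \in R n -> GR (stepm x n r).

Lemma GR_reach x : GR x -> Reach x.
Proof.
elim=> [|y n r _ Hy [en _] rR]; first by exists [::].
exact: Reach_step.
Qed.

Lemma kmin_ex (x : mk) : (exists n, enabled x n) -> exists n, kmin x n.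
Proof.
case=> n en; exists [arg min_(i < n | enabled x i) key i].
by case: arg_minnP => // i ei H; split.
Qed.

Lemma P_nz n : P n != set0.
Proof. by case: wf => _ [_ [H _]]. Qed.

Lemma R_ex n : exists r, r \in R n.
Proof. by case: wf => _ [_ [_ [H _]]]; case/set0Pn: (H n) => r; exists r. Qed.

Lemma P_ex n : exists c, c \in P n.
Proof. by case/set0Pn: (P_nz n) => c; exists c. Qed.

Lemma sgl_en (x : mk) n c : sgl x -> n \in x c -> x c = [set n].
Proof.
move=> /(_ c) [->|[m ->]]; first by rewrite inE.
by rewrite inE => /eqP ->.
Qed.

Lemma gstep_keys (x : mk) n r : kmin x n -> r \in R n ->
  forall m, enabled (stepm x n r) m -> key n < key m.
Proof.
move=> [en H] rR m em; case: (en_step rR em) => [/H|/key_edge //].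
rewrite leq_eqVlt => /orP [/eqP/key_inj e|//]; subst m.
case: (P_ex n) => c cn; have /forall_inP /(_ _ cn) := em.
rewrite ffunE cn => h.
have : edge n n by apply/existsP; exists c; apply/existsP; exists r; rewrite /inT cn rR h.
by move/key_edge; rewrite ltnn.
Qed.

Definition single (L : atm) := forall r1 r2, r1 \in R L -> r2 \in R L ->
  forall a, a \in P L -> X L a r1 = X L a r2.

Lemma single_card L : single L -> #|R L| <= 1.
Proof.
move=> H; apply/card_le1_eqP => r1 r2 h1 h2.
case: (eqVneq r1 r2) => // ne; exfalso; case: irr => M _; apply: M.
by exists L, r1, r2; split => // a aP; exact: H.
Qed.

Lemma det_sgl n a r : inT n a r -> n != nf N -> exists m, X n a r = [set m].
Proof. exact: det. Qed.

Lemma no_uncond L r d : r \in R L -> L != d -> uncond_enables L r d -> single d -> False.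
Proof.
move=> rR ne ue sd; case: irr => _ D; apply: D.
exists L, d, r; split => //; first exact: single_card.
case=> nt [at0 [rt [iT ntn dX]]]; exists nt, at0, rt; split => //.
case: (eqVneq nt (nf N)) => [e|nnf].
  by move: dX; have := wf_X iT; rewrite e eqxx => /eqP ->; rewrite inE.
by case: (det iT nnf) => m e; move: dX; rewrite e inE => /eqP ->.
Qed.


Definition Rel (L : atm) r1 r2 (u v : mk) :=
  (forall b, u b = v b \/ [/\ b \in P L, u b = X L b r1 & v b = X L b r2]) /\
  (forall a, a \in P L -> X L a r1 = X L a r2 \/ (u a = X L a r1 /\ v a = X L a r2)).

Lemma Rel_sym L r1 r2 u v : Rel L r1 r2 u v -> Rel L r2 r1 v u.
Proof.
case=> [H1 H2]; split.
  by move=> b; case: (H1 b) => [->|[? ? ?]]; [left|right].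
by move=> a aP; case: (H2 a aP) => [->|[? ?]]; [left|right].
Qed.

Definition IHs (L : atm) := forall d u, GR u -> ~~ syncb u -> kmin u d -> key L < key d -> single d.

Lemma L_nnf (L : atm) : (exists o, o \notin P L) -> L != nf N.
Proof.
case=> o oL; apply/eqP => e; move: oL; rewrite e.
by case: wf => _ [_ [_ [_ [_ [_ [H _]]]]]]; rewrite H.
Qed.

Lemma X_sgl (L : atm) a r d : a \in P L -> r \in R L -> L != nf N ->
  d \in X L a r -> X L a r = [set d].
Proof.
move=> aP rR nnf; have iT : inT L a r by rewrite /inT aP rR.
by case: (det iT nnf) => m ->; rewrite inE => /eqP ->.
Qed.

Section Lock.
Variables (L : atm) (IH : IHs L) (outs : exists o, o \notin P L).

Lemma sideA r1 r2 u v d : r1 \in R L -> GR u -> Rel L r1 r2 u v -> ~~ syncb u -> kmin u d ->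
  key L < key d -> (forall q, q \in P d -> u q != v q) -> False.
Proof.
move=> rR gu [H1 _] ns km kL Hq.
apply: (no_uncond rR _ _ (IH gu ns km kL)).
  by apply/eqP => e; move: kL; rewrite e ltnn.
have nnf := L_nnf outs.
have T : forall q, q \in P d -> q \in P L /\ X L q r1 = [set d].
  move=> q qd; case: (H1 q) => [e|[qL e _]]; first by move: (Hq q qd); rewrite e eqxx.
  split=> //; apply: X_sgl => //; rewrite -e.
  by case: km => /forall_inP /(_ _ qd).
split; first by apply/subsetP => q /T [].
by move=> q /T [].
Qed.

Lemma sideB r1 r2 u v d : r1 \in R L -> GR u -> GR v -> Rel L r1 r2 u v -> ~~ syncb u -> kmin u d ->
  key L < key d -> (forall m, enabled v m -> key d < key m) -> False.
Proof.
move=> rR gu gv rel ns km kL Hv; apply: (sideA rR gu rel ns km kL) => q qd.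
apply/negP => /eqP e.
have dq : d \in u q by case: km => /forall_inP /(_ _ qd).
rewrite e in dq; have vq := sgl_en (sgl_reach (GR_reach gv)) dq.
exact: (stuck (GR_reach gv) vq Hv).
Qed.

Lemma syncbP (u : mk) : syncb u -> exists t, forall b, u b = [set t].
Proof. by case/existsP => t /forallP H; exists t => b; apply/eqP. Qed.

Lemma sideC r1 r2 u v k : r2 \in R L -> GR u -> GR v -> Rel L r1 r2 u v -> syncb u -> ~~ syncb v ->
  key L <= k -> (forall m, enabled v m -> k < key m) -> False.
Proof.
move=> rR gu gv rel /syncbP [t Ht] nsv kL Hv.
case: outs => o oL.
have vo : v o = [set t].
  case: rel => H1 _; case: (H1 o) => [<-|[oL' _ _]]; first exact: Ht.
  by rewrite oL' in oL.
have nxf : v <> xf N by move=> e; move: vo; rewrite e ffunE => h; move: (set1_nz t); rewrite -h eqxx.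
case: (kmin_ex (en_ex (GR_reach gv) nxf)) => d km.
have kd : key L < key d by apply: leq_ltn_trans kL (Hv _ km.1).
case: (boolP [forall q in P d, u q != v q]) => [/forall_inP Hq|].
  apply: (sideA rR gv (Rel_sym rel) nsv km kd) => q qd; rewrite eq_sym; exact: Hq.
rewrite negb_forall_in => /existsP [q /andP [qd]]; rewrite negbK => /eqP e.
have : d \in v q by case: km => /forall_inP /(_ _ qd).
rewrite -e Ht inE => /eqP dt; subst d.
have full : forall b, b \in P t by move=> b; apply: (factD (GR_reach gu)); exact: Ht.
case/negP: nsv; apply/existsP; exists t; apply/forallP => b; apply/eqP.
apply: (sgl_en (sgl_reach (GR_reach gv))).
by case: km => /forall_inP /(_ _ (full b)).
Qed.

End Lock.

Lemma sync_end L r1 r2 u v : (exists o, o \notin P L) -> syncb u -> syncb v -> Rel L r1 r2 u v ->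
  forall a, a \in P L -> X L a r1 = X L a r2.
Proof.
move=> [o oL] /syncbP [t Ht] /syncbP [t' Ht'] [H1 H2].
have e : t = t'.
  case: (H1 o) => [|[oL' _ _]]; last by rewrite oL' in oL.
  by rewrite Ht Ht' => /setP /(_ t); rewrite !inE eqxx => /esym/eqP.
move=> a aP; case: (H2 a aP) => [//|[<- <-]]; by rewrite Ht Ht' e.
Qed.

Lemma xf_end L r1 r2 u v : (exists o, o \notin P L) -> r1 \in R L -> u = xf N -> Rel L r1 r2 u v ->
  forall a, a \in P L -> X L a r1 = X L a r2.
Proof.
move=> outs rR e [_ H2] a aP; case: (H2 a aP) => [//|[h _]].
have iT : inT L a r1 by rewrite /inT aP rR.
move: (wf_X iT); rewrite (negbTE (L_nnf outs)) -h e ffunE eqxx //.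
Qed.

Lemma Rel_step L r1 r2 u v d r : r1 \in R L -> r2 \in R L -> L != nf N ->
  Rel L r1 r2 u v -> enabled u d -> enabled v d ->
  Rel L r1 r2 (stepm u d r) (stepm v d r).
Proof.
move=> h1 h2 nnf [H1 H2] eu ev; split.
  move=> b; rewrite !ffunE; case: ifP => bd; first by left.
  exact: H1.
move=> a aP; case: (H2 a aP) => [|[ua va]]; first by left.
case: (boolP (a \in P d)) => ad; last by right; rewrite !ffunE (negbTE ad).
left; have du : d \in u a by move/forall_inP: eu => /(_ _ ad).
have dv : d \in v a by move/forall_inP: ev => /(_ _ ad).
rewrite ua in du; rewrite va in dv.
by rewrite (X_sgl aP h1 nnf du) (X_sgl aP h2 nnf dv).
Qed.


Definition mu k := #|[pred m : atm | k < key m]|.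

Lemma mu_lt k d : k < key d -> mu (key d) < mu k.
Proof.
move=> kd; apply: proper_card; apply/properP; split.
  by apply/subsetP => m; rewrite !inE => h; exact: ltn_trans kd h.
by exists d; rewrite !inE ?ltnn.
Qed.

Lemma lockstep L r1 r2 (IH : IHs L) (outs : exists o, o \notin P L) :
  r1 \in R L -> r2 \in R L -> forall j k u v, mu k < j -> key L <= k -> GR u -> GR v ->
  (forall m, enabled u m -> k < key m) -> (forall m, enabled v m -> k < key m) ->
  Rel L r1 r2 u v -> forall a, a \in P L -> X L a r1 = X L a r2.
Proof.
move=> h1 h2; elim=> [//|j IHj] k u v mk kL gu gv Hu Hv rel.
have nnf := L_nnf outs.
case: (eqVneq u (xf N)) => [e|nu]; first exact: (xf_end outs h1 e rel).
case: (eqVneq v (xf N)) => [e|nv].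
  by move=> a aP; apply/esym; exact: (xf_end outs h2 e (Rel_sym rel)).
case: (boolP (syncb u)) => su.
  case: (boolP (syncb v)) => sv; first exact: (sync_end outs su sv rel).
  by case: (sideC IH outs h2 gu gv rel su sv kL Hv).
case: (boolP (syncb v)) => sv.
  by case: (sideC IH outs h1 gv gu (Rel_sym rel) sv su kL Hu).
case: (kmin_ex (en_ex (GR_reach gu) (fun e => negP nu (introT eqP e)))) => du ku.
case: (kmin_ex (en_ex (GR_reach gv) (fun e => negP nv (introT eqP e)))) => dv kv.
have kdu : key L < key du by apply: leq_ltn_trans kL (Hu _ ku.1).
have kdv : key L < key dv by apply: leq_ltn_trans kL (Hv _ kv.1).
case: (eqVneq du dv) => [e|ne].
  subst dv; case: (R_ex du) => r rR.
  apply: (IHj (key du) (stepm u du r) (stepm v du r)).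
  - by apply: leq_trans (mu_lt (Hu _ ku.1)) _.
  - exact: ltnW.
  - exact: GRs.
  - exact: GRs.
  - exact: gstep_keys.
  - exact: gstep_keys.
  - exact: Rel_step h1 h2 nnf rel ku.1 kv.1.
have nk : key du != key dv by apply/eqP => /key_inj; apply/eqP.
case: (ltngtP (key du) (key dv)) nk => // lt _.
  case: (sideB IH outs h1 gu gv rel su ku kdu) => m /kv.2; exact: leq_trans.
case: (sideB IH outs h2 gv gu (Rel_sym rel) sv kv kdv) => m /ku.2; exact: leq_trans.
Qed.

Lemma claim j : forall L z, mu (key L) < j -> GR z -> ~~ syncb z -> kmin z L -> single L.
Proof.
elim: j => [//|j IHj] L z mL gz ns km.
have IH : IHs L.
  move=> d u gu nsu kmu kd; apply: (IHj d u) => //.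
  by apply: leq_trans (mu_lt kd) _.
have outs : exists o, o \notin P L.
  case: (boolP [forall o, o \in P L]) => [/forallP H|]; last first.
    by rewrite negb_forall => /existsP [o oL]; exists o.
  case/negP: ns; apply/existsP; exists L; apply/forallP => b; apply/eqP.
  apply: (sgl_en (sgl_reach (GR_reach gz))).
  by case: km => /forall_inP /(_ _ (H b)).
have nnf := L_nnf outs.
move=> r1 r2 h1 h2.
apply: (lockstep IH outs h1 h2 (ltnSn (mu (key L))) (leqnn _) (GRs gz km h1) (GRs gz km h2)).
- exact: gstep_keys.
- exact: gstep_keys.
split.
  move=> b; rewrite !ffunE; case: ifP => bL; last by left.
  by right.
by move=> a aP; right; rewrite !ffunE aP.
Qed.


Lemma sync_en (x : mk) f n : (forall b, x b = [set f]) -> enabled x n -> n = f.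
Proof.
move=> H en; case: (P_ex n) => c cn.
by move/forall_inP: en => /(_ _ cn); rewrite H inE => /eqP.
Qed.

Lemma xf_en n : ~~ enabled (xf N) n.
Proof.
apply/negP => en; case: (P_ex n) => c cn.
by move/forall_inP: en => /(_ _ cn); rewrite ffunE inE.
Qed.

Lemma sync_kmin (x : mk) f n : (forall b, x b = [set f]) -> enabled x n -> kmin x n.
Proof.
move=> H en; split => // m em.
by rewrite (sync_en H en) (sync_en H em).
Qed.

Lemma GR_sync x : GR x -> syncb x || (x == xf N).
Proof.
elim=> [|y n r gy IHy km rR].
  by apply/orP; left; apply/existsP; exists (n0 N); apply/forallP => b; rewrite ffunE.
case/orP: IHy => [/syncbP [f Hf]|/eqP e]; last by move: km.1; rewrite e (negbTE (xf_en n)).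
have nf_ := sync_en Hf km.1; subst n.
have full : forall b, b \in P f by move=> b; apply: (factD (GR_reach gy)); exact: Hf.
case: (eqVneq f (nf N)) => [e|fnf].
  apply/orP; right; apply/eqP/ffunP => b; rewrite !ffunE full.
  have iT : inT f b r by rewrite /inT full rR.
  by apply/eqP; rewrite wf_X // e.
case: (boolP (syncb (stepm y f r))) => // ns.
have gz := GRs gy km rR.
have nxf : stepm y f r <> xf N.
  case: (wf) => [[a _] _] e; have := congr1 (fun z : mk => z a) e; rewrite !ffunE full => h.
  have iT : inT f a r by rewrite /inT full rR.
  by move: (wf_X iT); rewrite h eqxx (negbTE fnf).
case: (kmin_ex (en_ex (GR_reach gz) nxf)) => M kM.
have sM := claim (ltnSn (mu (key M))) gz ns kM.
exfalso; apply: (no_uncond rR _ _ sM).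
  apply/eqP => e; subst M; case: (P_ex f) => c cf.
  have : edge f f.
    apply/existsP; exists c; apply/existsP; exists r; rewrite /inT cf rR /=.
    by case: kM => /forall_inP /(_ _ cf); rewrite ffunE cf.
  by move/key_edge; rewrite ltnn.
split; first by apply/subsetP => b _; exact: full.
move=> p pM; apply: X_sgl => //.
by case: kM => /forall_inP /(_ _ pM); rewrite ffunE full.
Qed.

Lemma GR_occ s (x y : mk) : GR x -> occ x s = Some y -> GR y.
Proof.
elim: s x => [|[n r] s IH] x /=; first by move=> ? [<-].
case: ifP => // /andP [en rR] gx; apply: IH.
case/orP: (GR_sync gx) => [/syncbP [f Hf]|/eqP e]; last by move: en; rewrite e (negbTE (xf_en n)).
exact: GRs gx (sync_kmin Hf en) rR.
Qed.

Lemma reach_GR x : Reach x -> GR x.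
Proof. by case=> s; apply: GR_occ; exact: GR0. Qed.

Lemma main :
  (forall (n : atm) (a : A), a \in P n) /\
  (forall (n : atm), n != nf N ->
     forall r, r \in R n -> exists n' : atm, forall a : A, X n a r = [set n']).
Proof.
have en_sync : forall n, exists x, Reach x /\ enabled x n /\ forall b, x b = [set n].
  move=> n; case: snd => [H _]; case: (H n) => s [x [Hs en]].
  have gx : GR x by apply: reach_GR; exists s.
  case/orP: (GR_sync gx) => [/syncbP [f Hf]|/eqP e]; last by move: en; rewrite e (negbTE (xf_en n)).
  exists x; split; first by exists s.
  by split => //; rewrite (sync_en Hf en).
have part1 : forall (n : atm) (a : A), a \in P n.
  move=> n a; case: (en_sync n) => x [rx [en Hx]]; exact: factD rx (Hx a).
split=> // n nnf r rR.
case: (en_sync n) => x [rx [en Hx]].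
have gy : GR (stepm x n r) by apply: GRs (reach_GR rx) (sync_kmin Hx en) rR.
case/orP: (GR_sync gy) => [/syncbP [n' Hn']|/eqP e].
  by exists n' => a; have := Hn' a; rewrite ffunE part1.
case: (wf) => [[a _] _]; have := congr1 (fun z : mk => z a) e; rewrite !ffunE part1 => h.
have iT : inT n a r by rewrite /inT part1 rR.
by move: (wf_X iT); rewrite h eqxx (negbTE nnf).
Qed.

End Main.

Theorem lemma2 (A : finType) (Q : A -> Type) (N : negotiation Q) :
  well_formed N -> SDAN N -> irreducible N ->
  (forall (n : atom N) (a : A), a \in parties N n) /\
  (forall (n : atom N), n != nf N ->
     forall r, r \in outcomes N n ->
       exists n' : atom N, forall a : A, xnext N n a r = [set n']).
Proof.
move=> wf [snd [det acy]] irr; exact: (main wf snd det acy irr).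
Qed.
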